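(* Let $\tau_2\ge 2$, $b>\tau_2$, and $\epsilon>0$ be such that \[\delta:=\frac{b(1-\epsilon)-\tau_2(1+\epsilon)^2}{\tau_2(b-1)(1+\epsilon)}\] satisfies $\delta-\epsilon>0$, and let $C_\epsilon>0$. Then there exists $M_*$ (depending on $\epsilon,b,\tau_2,C_\epsilon$) such that the following holds whenever $M\ge M_*$ and $M':=M^{b}$. Let $F,G:\mathbb{Z}\to\mathbb{C}$ satisfy \begin{align*} F(0)&=1, \qquad F(s)=0\ \text{ if }1\le|s|<M',\\ |F(s)|&\le C_\epsilon M'^{-1+\epsilon}\ \text{ if }M'\le|s|\le M'^{\tau_2(1+\epsilon/2)},\\ |F(s)|&\le\exp\big(-|s/M'^{\tau_2}|^{1/2}\big)\ \text{ if }|s|\ge M'^{\tau_2(1+\epsilon/2)}, \end{align*} and \begin{align*} |G(0)|&\le2,\qquad |G(s)|\le 2|s|^{-\delta+\epsilon}\ \text{ if }0<|s|\le M^{\tau_2(1+\epsilon)},\\ |G(s)|&\le\exp\big(-\tfrac12|s/M^{\tau_2}|^{1/2}\big)\ \text{ if }|s|\ge M^{\tau_2(1+\epsilon)}. \end{align*} Then, with $F*G(s)=\sum_{t\in\mathbb{Z}}F(t)G(s-t)$: (a) $|F*G(s)-G(s)|\le M'^{-\delta}$ if $|s|\le M^{\tau_2(1+\epsilon)}$; (b) $|F*G(s)|\le|s|^{-\delta+\epsilon}$ if $M^{\tau_2(1+\epsilon)}<|s|\le M'^{\tau_2(1+\epsilon)}$; (c) $|F*G(s)|\le\exp\big(-\tfrac12|s/M'^{\tau_2}|^{1/2}\big)$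 if $|s|>M'^{\tau_2(1+\epsilon)}$. *)

(* Defs.v *)
From Stdlib Require Import Reals ZArith Lra.
From Coquelicot Require Import Coquelicot.
Open Scope R_scope.

(* Under
   absolute summability (guaranteed by the hypotheses of lemma7) this is the
   usual sum over Z. *)
Definition zsum (f : Z -> C) : C :=
  (Series (fun n => Re (f (Z.of_nat n))) +
   Series (fun n => Re (f (- Z.of_nat (S n))%Z)),
   Series (fun n => Im (f (Z.of_nat n))) +
   Series (fun n => Im (f (- Z.of_nat (S n))%Z))).

Definition zconv (F G : Z -> C) (s : Z) : C :=
  zsum (fun t => Cmult (F t) (G (s - t)%Z)).

Definition zabs (s : Z) : R := Rabs (IZR s).

(* Main.v *)
Require Import Defs.
From Stdlib Require Import Reals ZArith Lra Lia.
From Coquelicot Require Import Coquelicot.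
Open Scope R_scope.

Lemma series_bdd (a : nat -> R) X : (forall n, 0 <= a n) ->
  (forall N, sum_n a N <= X) -> ex_series a /\ Series a <= X.
Proof.
  intros Ha HX.
  assert (Hinc : forall n, sum_n a n <= sum_n a (S n)).
  { intro n. rewrite sum_Sn. simpl. unfold plus; simpl. specialize (Ha (S n)). lra. }
  assert (Hex := ex_lim_seq_incr _ Hinc).
  assert (Hle : Rbar_le (Lim_seq (sum_n a)) (Lim_seq (fun _ => X))).
  { apply Lim_seq_le_loc. exists O. intros; apply HX. }
  rewrite Lim_seq_const in Hle.
  assert (Hge : Rbar_le (Lim_seq (fun _ => a O)) (Lim_seq (sum_n a))).
  { apply Lim_seq_le_loc. exists O. intros n _. induction n.
    - rewrite sum_O. lra.
    - specialize (Hinc n). lra. }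
  rewrite Lim_seq_const in Hge.
  destruct (Lim_seq (sum_n a)) as [l| |] eqn:El; simpl in Hle, Hge; try contradiction.
  assert (His : is_series a l).
  { generalize (Lim_seq_correct _ Hex). rewrite El. intro H; exact H. }
  split. exists l; exact His.
  rewrite (is_series_unique _ _ His). exact Hle.
Qed.

Lemma sum_n_nonneg (a : nat -> R) N : (forall n, 0 <= a n) -> 0 <= sum_n a N.
Proof. intro H. induction N. rewrite sum_O; auto. rewrite sum_Sn. unfold plus; simpl. specialize (H (S N)). lra. Qed.

Definition psum (w : Z -> R) (N : nat) : R :=
  sum_n (fun n => w (Z.of_nat n)) N + sum_n (fun n => w (- Z.of_nat (S n))%Z) N.

Lemma Cmod_le2 (z : C) X : Rabs (fst z) <= X -> Rabs (snd z) <= X -> Cmod z <= 2 * X.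
Proof.
  intros H1 H2. eapply Rle_trans. apply Cmod_2Rmax.
  assert (Rmax (Rabs (fst z)) (Rabs (snd z)) <= X) by (apply Rmax_lub; auto).
  assert (sqrt 2 <= 2).
  { rewrite <- (sqrt_square 2) at 2 by lra. apply sqrt_le_1_alt. lra. }
  assert (0 <= Rmax (Rabs (fst z)) (Rabs (snd z))).
  { eapply Rle_trans. apply Rabs_pos. apply Rmax_l. }
  assert (0 <= sqrt 2) by apply sqrt_pos.
  nra.
Qed.

Lemma half_bound (g : nat -> R) (w : nat -> R) :
  (forall n, Rabs (g n) <= w n) -> ex_series w ->
  ex_series g /\ Rabs (Series g) <= Series w.
Proof.
  intros Hg Hw.
  assert (Ha : ex_series (fun n => Rabs (g n))).
  { apply (@ex_series_le R_AbsRing R_CompleteNormedModule) with w; auto. intro n. unfold norm; simpl.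
    unfold abs; simpl. rewrite Rabs_Rabsolu. apply Hg. }
  split. apply ex_series_Rabs. exact Ha.
  eapply Rle_trans. apply Series_Rabs. exact Ha.
  apply Series_le; auto. intro n; split. apply Rabs_pos. apply Hg.
Qed.

Lemma zsum_bound (f : Z -> C) (w : Z -> R) X :
  (forall t, Cmod (f t) <= w t) -> (forall t, 0 <= w t) ->
  (forall N, psum w N <= X) -> Cmod (zsum f) <= 2 * X.
Proof.
  intros Hf Hw HX.
  set (ap := fun n => w (Z.of_nat n)). set (an := fun n => w (- Z.of_nat (S n))%Z).
  assert (Hp : ex_series ap).
  { apply (series_bdd ap X). intro; apply Hw. intro N. specialize (HX N). unfold psum in HX.
    assert (0 <= sum_n an N).
    { apply sum_n_nonneg. intro; apply Hw. }
    fold ap an in HX. lra. }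
  assert (Hn : ex_series an).
  { apply (series_bdd an X). intro; apply Hw. intro N. specialize (HX N). unfold psum in HX.
    assert (0 <= sum_n ap N).
    { apply sum_n_nonneg. intro; apply Hw. }
    fold ap an in HX. lra. }
  assert (Hs : Series ap + Series an <= X).
  { rewrite <- Series_plus by auto.
    apply (series_bdd (fun n => ap n + an n) X). intro n; unfold ap, an; generalize (Hw (Z.of_nat n));
    generalize (Hw (- Z.of_nat (S n))%Z); lra.
    intro N. generalize (sum_n_plus ap an N). unfold plus; simpl. intro E; rewrite E. apply HX. }
  apply Cmod_le2; unfold zsum; cbn [fst snd].
  - destruct (half_bound (fun n => Re (f (Z.of_nat n))) ap) as [_ H1]; auto.
    { intro n. eapply Rle_trans. apply re_le_Cmod. apply Hf. }
    destruct (half_bound (fun n => Re (f (- Z.of_nat (S n))%Z)) an) as [_ H2]; auto.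
    { intro n. eapply Rle_trans. apply re_le_Cmod. apply Hf. }
    eapply Rle_trans. apply Rabs_triang. unfold ap, an in *. lra.
  - assert (Him : forall c : C, Rabs (Im c) <= Cmod c).
    { intro c. eapply Rle_trans. apply Rmax_r. apply Rmax_Cmod. }
    destruct (half_bound (fun n => Im (f (Z.of_nat n))) ap) as [_ H1]; auto.
    { intro n. eapply Rle_trans. apply Him. apply Hf. }
    destruct (half_bound (fun n => Im (f (- Z.of_nat (S n))%Z)) an) as [_ H2]; auto.
    { intro n. eapply Rle_trans. apply Him. apply Hf. }
    eapply Rle_trans. apply Rabs_triang. unfold ap, an in *. lra.
Qed.

Lemma w_ex (w : Z -> R) X : (forall t, 0 <= w t) -> (forall N, psum w N <= X) ->
  ex_series (fun n => w (Z.of_nat n)) /\ ex_series (fun n => w (- Z.of_nat (S n))%Z).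
Proof.
  intros Hw HX. split.
  - apply (series_bdd _ X). intro; apply Hw. intro N. specialize (HX N). unfold psum in HX.
    assert (0 <= sum_n (fun n => w (- Z.of_nat (S n))%Z) N) by (apply sum_n_nonneg; intro; apply Hw).
    lra.
  - apply (series_bdd _ X). intro; apply Hw. intro N. specialize (HX N). unfold psum in HX.
    assert (0 <= sum_n (fun n => w (Z.of_nat n)) N) by (apply sum_n_nonneg; intro; apply Hw).
    lra.
Qed.

Lemma zsum_drop0 (f : Z -> C) (w : Z -> R) X :
  (forall t, Cmod (f t) <= w t) -> (forall t, 0 <= w t) ->
  (forall N, psum w N <= X) ->
  Cminus (zsum f) (f 0%Z) = zsum (fun t => if Z.eqb t 0 then RtoC 0 else f t).
Proof.
  intros Hf Hw HX. destruct (w_ex w X Hw HX) as [Hp Hn].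
  set (f' := fun t => if Z.eqb t 0 then RtoC 0 else f t).
  assert (Hf' : forall t, Cmod (f' t) <= w t).
  { intro t. unfold f'. destruct (Z.eqb t 0). rewrite Cmod_0. apply Hw. apply Hf. }
  assert (Him : forall c : C, Rabs (Im c) <= Cmod c).
  { intro c. eapply Rle_trans. apply Rmax_r. apply Rmax_Cmod. }
  assert (Er : ex_series (fun n => Re (f (Z.of_nat n)))).
  { apply (half_bound _ (fun n => w (Z.of_nat n))); auto. intro n.
    eapply Rle_trans. apply re_le_Cmod. apply Hf. }
  assert (Ei : ex_series (fun n => Im (f (Z.of_nat n)))).
  { apply (half_bound _ (fun n => w (Z.of_nat n))); auto. intro n.
    eapply Rle_trans. apply Him. apply Hf. }
  assert (Er' : ex_series (fun n => Re (f' (Z.of_nat n)))).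
  { apply (half_bound _ (fun n => w (Z.of_nat n))); auto. intro n.
    eapply Rle_trans. apply re_le_Cmod. apply Hf'. }
  assert (Ei' : ex_series (fun n => Im (f' (Z.of_nat n)))).
  { apply (half_bound _ (fun n => w (Z.of_nat n))); auto. intro n.
    eapply Rle_trans. apply Him. apply Hf'. }
  assert (Eneg : forall n, f' (- Z.of_nat (S n))%Z = f (- Z.of_nat (S n))%Z).
  { intro n. unfold f'. replace (Z.eqb (- Z.of_nat (S n)) 0) with false. reflexivity.
    symmetry. apply Z.eqb_neq. lia. }
  assert (Epos : forall n, f' (Z.of_nat (S n)) = f (Z.of_nat (S n))).
  { intro n. unfold f'. replace (Z.eqb (Z.of_nat (S n)) 0) with false. reflexivity.
    symmetry. apply Z.eqb_neq. lia. }
  unfold zsum, Cminus, Cplus, Copp. cbn [fst snd].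
  rewrite (Series_incr_1 _ Er), (Series_incr_1 _ Ei), (Series_incr_1 _ Er'), (Series_incr_1 _ Ei').
  rewrite (Series_ext (fun k => Re (f' (Z.of_nat (S k)))) (fun k => Re (f (Z.of_nat (S k))))) by (intro; now rewrite Epos).
  rewrite (Series_ext (fun k => Im (f' (Z.of_nat (S k)))) (fun k => Im (f (Z.of_nat (S k))))) by (intro; now rewrite Epos).
  rewrite (Series_ext (fun k => Re (f' (- Z.of_nat (S k))%Z)) (fun k => Re (f (- Z.of_nat (S k))%Z))) by (intro; now rewrite Eneg).
  rewrite (Series_ext (fun k => Im (f' (- Z.of_nat (S k))%Z)) (fun k => Im (f (- Z.of_nat (S k))%Z))) by (intro; now rewrite Eneg).
  unfold f', Re, Im. simpl. f_equal; ring.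
Qed.

Lemma sum_n_le_m (a b : nat -> R) N : (forall n, a n <= b n) -> sum_n a N <= sum_n b N.
Proof. intro H. induction N. rewrite !sum_O; auto. rewrite !sum_Sn. unfold plus; simpl.
  specialize (H (S N)). lra. Qed.

Lemma psum_le (w w' : Z -> R) N : (forall t, w t <= w' t) -> psum w N <= psum w' N.
Proof. intro H. unfold psum. generalize (sum_n_le_m (fun n => w (Z.of_nat n)) (fun n => w' (Z.of_nat n)) N (fun n => H _)).
  generalize (sum_n_le_m (fun n => w (- Z.of_nat (S n))%Z) (fun n => w' (- Z.of_nat (S n))%Z) N (fun n => H _)). lra. Qed.

Lemma psum_plus (w w' : Z -> R) N : psum (fun t => w t + w' t) N = psum w N + psum w' N.
Proof. unfold psum.
  generalize (sum_n_plus (fun n => w (Z.of_nat n)) (fun n => w' (Z.of_nat n)) N).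
  generalize (sum_n_plus (fun n => w (- Z.of_nat (S n))%Z) (fun n => w' (- Z.of_nat (S n))%Z) N).
  unfold plus; simpl. intros E1 E2. rewrite E1, E2. ring. Qed.

Lemma sum_inv_sq N : sum_n (fun n => / (INR n + 1) ^ 2) N <= 2 - / (INR N + 1).
Proof.
  induction N.
  - rewrite sum_O. simpl. lra.
  - rewrite sum_Sn. rewrite S_INR. change (sum_n (fun n => / (INR n + 1) ^ 2) N + / (INR N + 1 + 1) ^ 2 <= 2 - / (INR N + 1 + 1)).
    assert (0 <= INR N) by apply pos_INR.
    assert (/ (INR N + 1 + 1) ^ 2 <= / (INR N + 1) - / (INR N + 1 + 1)).
    { replace (/ (INR N + 1) - / (INR N + 1 + 1)) with (/ ((INR N + 1) * (INR N + 1 + 1))) by (field; lra).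
      apply Rinv_le_contravar. nra. nra. }
    lra.
Qed.

Lemma sum_inv_sqB B N : 0 <= B -> sum_n (fun n => B * / (INR n + 1) ^ 2) N <= 2 * B.
Proof.
  intro HB. assert (E : forall N, sum_n (fun n => B * / (INR n + 1) ^ 2) N = B * sum_n (fun n => / (INR n + 1) ^ 2) N).
  { induction N0. rewrite !sum_O. auto. rewrite !sum_Sn, IHN0. unfold plus; simpl. ring. }
  rewrite E. generalize (sum_inv_sq N). assert (0 < / (INR N + 1)). { apply Rinv_0_lt_compat. generalize (pos_INR N); lra. }
  nra.
Qed.

Lemma zabs_pos n : zabs (Z.of_nat n) = INR n.
Proof. unfold zabs. rewrite <- INR_IZR_INZ. apply Rabs_pos_eq, pos_INR. Qed.

Lemma zabs_neg n : zabs (- Z.of_nat (S n))%Z = INR n + 1.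
Proof. unfold zabs. rewrite opp_IZR, <- INR_IZR_INZ, Rabs_Ropp, S_INR. apply Rabs_pos_eq.
  generalize (pos_INR n); lra. Qed.

Lemma psum_poly B N : 0 <= B -> psum (fun t => B / (1 + zabs t) ^ 2) N <= 4 * B.
Proof.
  intro HB. unfold psum.
  assert (H1 : sum_n (fun n => B / (1 + zabs (Z.of_nat n)) ^ 2) N <= 2 * B).
  { assert (E : sum_n (fun n => B / (1 + zabs (Z.of_nat n)) ^ 2) N <= sum_n (fun n => B * / (INR n + 1) ^ 2) N).
    { apply sum_n_le_m. intro n. rewrite zabs_pos. unfold Rdiv. rewrite Rplus_comm. lra. }
    eapply Rle_trans. exact E. apply sum_inv_sqB; auto. }
  assert (H2 : sum_n (fun n => B / (1 + zabs (- Z.of_nat (S n))%Z) ^ 2) N <= 2 * B).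
  { assert (E : sum_n (fun n => B / (1 + zabs (- Z.of_nat (S n))%Z) ^ 2) N <= sum_n (fun n => B * / (INR n + 1) ^ 2) N).
    { apply sum_n_le_m. intro n. rewrite zabs_neg. unfold Rdiv. apply Rmult_le_compat_l; auto.
      generalize (pos_INR n); intro. apply Rinv_le_contravar. nra. nra. }
    eapply Rle_trans. exact E. apply sum_inv_sqB; auto. }
  lra.
Qed.

Lemma psum_tele (Phi : Z -> R) (s : Z) N :
  psum (fun t => Phi (s - t + 1)%Z - Phi (s - t)%Z) N = Phi (s + Z.of_nat N + 2)%Z - Phi (s - Z.of_nat N)%Z.
Proof.
  unfold psum.
  assert (E1 : forall N, sum_n (fun n => Phi (s - Z.of_nat n + 1)%Z - Phi (s - Z.of_nat n)%Z) N = Phi (s + 1)%Z - Phi (s - Z.of_nat N)%Z).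
  { induction N0. rewrite sum_O. simpl. f_equal; f_equal; lia.
    rewrite sum_Sn, IHN0. unfold plus; simpl.
    replace (s - Z.pos (Pos.of_succ_nat N0) + 1)%Z with (s - Z.of_nat N0)%Z by lia. ring. }
  assert (E2 : forall N, sum_n (fun n => Phi (s - - Z.of_nat (S n) + 1)%Z - Phi (s - - Z.of_nat (S n))%Z) N = Phi (s + Z.of_nat N + 2)%Z - Phi (s + 1)%Z).
  { induction N0. rewrite sum_O. simpl. f_equal; f_equal; lia.
    rewrite sum_Sn, IHN0. unfold plus; simpl.
    replace (s - Z.neg (Pos.succ (Pos.of_succ_nat N0)))%Z with (s + Z.of_nat N0 + 2)%Z by lia.
    replace (s - Z.neg (Pos.succ (Pos.of_succ_nat N0)) + 1)%Z with (s + Z.pos (Pos.of_succ_nat N0) + 2)%Z by lia. replace (s + Z.of_nat N0 + 2 + 1)%Z with (s + Z.pos (Pos.of_succ_nat N0) + 2)%Z by lia. ring. }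
  rewrite E1, E2. ring.
Qed.

Lemma psum_scal (c : R) (w : Z -> R) N : psum (fun t => c * w t) N = c * psum w N.
Proof.
  unfold psum.
  assert (E : forall (a : nat -> R) N, sum_n (fun n => c * a n) N = c * sum_n a N).
  { intros a N0. induction N0. rewrite !sum_O. auto. rewrite !sum_Sn, IHN0. unfold plus; simpl. ring. }
  rewrite (E (fun n => w (Z.of_nat n))), (E (fun n => w (- Z.of_nat (S n))%Z)). ring.
Qed.


Lemma ln_le_sub1 y : 0 < y -> ln y <= y - 1.
Proof. intro Hy. generalize (exp_ineq1_le (ln y)). rewrite exp_ln by auto. lra. Qed.

Lemma exp_le x y : x <= y -> exp x <= exp y.
Proof. intro H. destruct H. left; apply exp_increasing; auto. subst; lra. Qed.

Lemma exp_nat n x : exp (INR n * x) = exp x ^ n.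
Proof. induction n. simpl. rewrite Rmult_0_l. apply exp_0.
  rewrite S_INR, Rmult_plus_distr_r, exp_plus, IHn, Rmult_1_l. simpl. ring. Qed.

Lemma Rpower_pos M a : 0 < Rpower M a.
Proof. unfold Rpower. apply exp_pos. Qed.

Lemma big_exp (k g a K0 : R) : 0 < k -> 0 < g -> 0 < K0 ->
  exists M0, 0 < M0 /\ forall M, M0 <= M -> K0 * Rpower M a <= exp (k * Rpower M g).
Proof.
  intros Hk Hg HK.
  set (c := Rabs a * (2 / g)).
  set (Z0 := (Rabs (ln K0) + c) / k + 1).
  assert (Hc : 0 <= c). { unfold c. apply Rmult_le_pos. apply Rabs_pos. unfold Rdiv. apply Rmult_le_pos. lra. left; apply Rinv_0_lt_compat; lra. }
  assert (HZ0 : 1 <= Z0). { unfold Z0. assert (0 <= (Rabs (ln K0) + c) / k). { unfold Rdiv; apply Rmult_le_pos. generalize (Rabs_pos (ln K0)); lra. left; apply Rinv_0_lt_compat; lra. } lra. }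
  exists (Rmax 1 (Rpower Z0 (2 / g))). split. { eapply Rlt_le_trans. apply Rlt_0_1. apply Rmax_l. }
  intros M HM.
  assert (HM1 : 1 <= M) by (eapply Rle_trans; [apply Rmax_l | exact HM]).
  assert (HMp : 0 < M) by lra.
  set (z := Rpower M (g / 2)).
  assert (Hz : Z0 <= z).
  { unfold z. replace Z0 with (Rpower (Rpower Z0 (2 / g)) (g / 2)).
    apply Rle_Rpower_l. lra. split. apply Rpower_pos. eapply Rle_trans; [apply Rmax_r | exact HM].
    rewrite Rpower_mult. replace (2 / g * (g / 2)) with 1 by (field; lra). apply Rpower_1. lra. }
  assert (Hz2 : Rpower M g = z * z).
  { unfold z. rewrite <- Rpower_plus. f_equal. field. }
  assert (HlnM : ln M = (2 / g) * ln z).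
  { unfold z. rewrite ln_Rpower. field. lra. }
  assert (Hlnz : ln z <= z) by (generalize (ln_le_sub1 z (Rpower_pos _ _)); lra).
  assert (HlnM0 : 0 <= ln M). { rewrite <- ln_1. apply ln_le; lra. }
  assert (Ha : a * ln M <= c * z).
  { apply Rle_trans with (Rabs a * ln M). { apply Rmult_le_compat_r; auto. apply RRle_abs. }
    unfold c. rewrite HlnM. assert (0 < 2 / g) by (unfold Rdiv; apply Rmult_lt_0_compat; [lra | apply Rinv_0_lt_compat; lra]).
    rewrite Rmult_assoc. apply Rmult_le_compat_l. apply Rabs_pos. apply Rmult_le_compat_l; lra. }
  assert (E : K0 * Rpower M a = exp (ln K0 + a * ln M)).
  { rewrite exp_plus, exp_ln by auto. unfold Rpower. f_equal. }
  rewrite E, Hz2. apply exp_le.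
  assert (HkZ : k * Z0 = Rabs (ln K0) + c + k) by (unfold Z0; field; lra).
  generalize (RRle_abs (ln K0)). intro.
  assert (1 <= z) by lra.
  assert (0 <= k * z * (z - Z0)) by (apply Rmult_le_pos; [apply Rmult_le_pos; lra | lra]).
  assert (z * Rabs (ln K0) >= Rabs (ln K0)) by (generalize (Rabs_pos (ln K0)); nra).
  assert (z * k >= 0) by nra.
  assert (k * (z * z) = k * z * (z - Z0) + z * (k * Z0)) by ring. rewrite HkZ in *. nra.
Qed.

Lemma big_pow (a a' K0 : R) : a < a' -> 0 < K0 ->
  exists M0, 0 < M0 /\ forall M, M0 <= M -> K0 * Rpower M a <= Rpower M a'.
Proof.
  intros Ha HK. exists (Rmax 1 (Rpower K0 (/ (a' - a)))). split.
  { eapply Rlt_le_trans. apply Rlt_0_1. apply Rmax_l. }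
  intros M HM.
  assert (HM1 : 1 <= M) by (eapply Rle_trans; [apply Rmax_l | exact HM]).
  assert (HK' : K0 <= Rpower M (a' - a)).
  { replace K0 with (Rpower (Rpower K0 (/ (a' - a))) (a' - a)).
    apply Rle_Rpower_l. lra. split. apply Rpower_pos. eapply Rle_trans; [apply Rmax_r | exact HM].
    rewrite Rpower_mult. replace (/ (a' - a) * (a' - a)) with 1 by (field; lra). apply Rpower_1. lra. }
  replace a' with ((a' - a) + a) by ring. rewrite Rpower_plus.
  apply Rmult_le_compat_r. left; apply Rpower_pos. auto.
Qed.

Lemma tiny (K0 a a' k g : R) : 0 < K0 -> 0 < k -> 0 < g ->
  exists M0, 0 < M0 /\ forall M, M0 <= M -> K0 * Rpower M a * exp (- (k * Rpower M g)) <= Rpower M a'.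
Proof.
  intros HK Hk Hg. destruct (big_exp k g (a - a') K0 Hk Hg HK) as [M0 [HM0 H]].
  exists M0. split; auto. intros M HM. specialize (H M HM).
  replace (Rpower M a) with (Rpower M (a - a') * Rpower M a') by (rewrite <- Rpower_plus; f_equal; ring).
  rewrite exp_Ropp.
  assert (0 < exp (k * Rpower M g)) by apply exp_pos.
  assert (0 < Rpower M a') by apply Rpower_pos.
  apply Rmult_le_reg_r with (exp (k * Rpower M g)); auto.
  rewrite Rmult_assoc, Rinv_l by lra. nra.
Qed.

Lemma exp_poly6 y : 0 < y -> y ^ 6 * exp (- y) <= 6 ^ 6.
Proof.
  intro Hy. assert (H : y / 6 <= exp (y / 6)) by (generalize (exp_ineq1_le (y / 6)); lra).
  assert (E : exp y = exp (y / 6) ^ 6).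
  { rewrite <- exp_nat. f_equal. simpl. field. }
  rewrite exp_Ropp, E.
  assert (0 < exp (y / 6)) by apply exp_pos.
  assert (0 <= y / 6) by lra.
  assert ((y / 6) ^ 6 <= exp (y / 6) ^ 6) by (apply pow_incr; lra).
  assert (0 < exp (y / 6) ^ 6) by (apply pow_lt; auto).
  replace (y ^ 6) with (6 ^ 6 * (y / 6) ^ 6) by (field).
  rewrite Rmult_assoc. rewrite <- (Rmult_1_r (6 ^ 6)) at 2. apply Rmult_le_compat_l. lra.
  apply Rmult_le_reg_r with (exp (y / 6) ^ 6); auto. rewrite Rmult_assoc, Rinv_l by lra. lra.
Qed.

Lemma exp_decay c y : 0 < c -> 0 < y -> exp (- (c * y)) <= (6 / c) ^ 6 / y ^ 6.
Proof.
  intros Hc Hy. generalize (exp_poly6 (c * y) ltac:(nra)). intro H.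
  assert (0 < y ^ 6) by (apply pow_lt; auto).
  apply Rmult_le_reg_r with (y ^ 6); auto. unfold Rdiv. rewrite Rmult_assoc, Rinv_l by lra.
  replace ((6 * / c) ^ 6 * 1) with (6 ^ 6 / c ^ 6) by (field; lra).
  assert (0 < c ^ 6) by (apply pow_lt; auto).
  apply Rmult_le_reg_r with (c ^ 6); auto.
  replace (6 ^ 6 / c ^ 6 * c ^ 6) with (6 ^ 6) by (field; lra).
  replace (exp (- (c * y)) * y ^ 6 * c ^ 6) with ((c * y) ^ 6 * exp (- (c * y))) by ring. lra.
Qed.

Lemma amgm x r : 0 < x -> 0 <= r <= 1 -> Rpower x r <= 1 + r * (x - 1).
Proof.
  intros Hx Hr. set (c := Rpower x r). assert (Hc : 0 < c) by apply Rpower_pos.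
  assert (H1 : ln (x / c) <= x / c - 1) by (apply ln_le_sub1; unfold Rdiv; apply Rmult_lt_0_compat; auto; apply Rinv_0_lt_compat; auto).
  assert (H2 : ln (/ c) <= / c - 1) by (apply ln_le_sub1; apply Rinv_0_lt_compat; auto).
  assert (E : r * ln (x / c) + (1 - r) * ln (/ c) = 0).
  { unfold Rdiv. rewrite ln_mult, ln_Rinv by (auto; apply Rinv_0_lt_compat; auto). unfold c. rewrite ln_Rpower. ring. }
  assert (0 <= r * (x / c - 1) + (1 - r) * (/ c - 1)) by nra.
  assert (E2 : r * (x / c - 1) + (1 - r) * (/ c - 1) = (1 + r * (x - 1)) / c - 1) by (field; lra).
  rewrite E2 in H. assert (1 <= (1 + r * (x - 1)) / c) by lra.
  apply Rmult_le_reg_r with (/ c). apply Rinv_0_lt_compat; auto. rewrite Rinv_r by lra. lra.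
Qed.

Lemma conc_step v r : 1 < v -> 0 <= r <= 1 -> r * Rpower v (r - 1) <= Rpower v r - Rpower (v - 1) r.
Proof.
  intros Hv Hr.
  assert (E : Rpower (v - 1) r = Rpower v r * Rpower ((v - 1) / v) r).
  { rewrite Rpower_mult_distr by (try lra; unfold Rdiv; apply Rmult_lt_0_compat; try lra; apply Rinv_0_lt_compat; lra).
    f_equal. field. lra. }
  assert (H := amgm ((v - 1) / v) r ltac:(unfold Rdiv; apply Rmult_lt_0_compat; try lra; apply Rinv_0_lt_compat; lra) Hr).
  assert (E2 : Rpower v (r - 1) = Rpower v r / v).
  { unfold Rminus. rewrite Rpower_plus. rewrite Rpower_Ropp, Rpower_1 by lra. reflexivity. }
  rewrite E, E2. assert (0 < Rpower v r) by apply Rpower_pos.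
  replace (1 + r * ((v - 1) / v - 1)) with (1 - r / v) in H by (field; lra).
  assert (Rpower v r * Rpower ((v - 1) / v) r <= Rpower v r * (1 - r / v)) by (apply Rmult_le_compat_l; lra).
  replace (r * (Rpower v r / v)) with (Rpower v r - Rpower v r * (1 - r / v)) by (field; lra). lra.
Qed.




Section PhiSec.
Variables (K q : R).
Hypothesis HK : 1 <= K.
Hypothesis Hq : 0 <= q < 1.

Definition rr := 1 - q.
Definition cc := 2 / rr.
Definition HH (x : R) : R := if Rle_dec x 0 then 0 else Rpower (Rmin x K) rr.
Definition Pp (u : Z) : R := 1 + cc * HH (IZR u - 1).
Definition Phi (u : Z) : R := if Z_le_dec 1 u then Pp u else - Pp (1 - u).

Lemma rr_pos : 0 < rr. Proof. unfold rr; lra. Qed.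
Lemma cc_ge2 : 2 <= cc.
Proof. unfold cc, rr. apply Rmult_le_reg_r with (1 - q). lra. unfold Rdiv. rewrite Rmult_assoc, Rinv_l by lra. nra. Qed.

Lemma HH_nonneg x : 0 <= HH x.
Proof. unfold HH. destruct Rle_dec. lra. left; apply Rpower_pos. Qed.

Lemma HH_mono x y : x <= y -> HH x <= HH y.
Proof.
  intro H. unfold HH. destruct (Rle_dec x 0); destruct (Rle_dec y 0).
  lra. left; apply Rpower_pos. lra.
  apply Rle_Rpower_l. generalize rr_pos; lra. split.
  apply Rmin_pos; lra. apply Rle_min_compat_r; auto.
Qed.

Lemma HH_le x : HH x <= Rpower K rr.
Proof.
  unfold HH. destruct Rle_dec. left; apply Rpower_pos.
  apply Rle_Rpower_l. generalize rr_pos; lra. split. apply Rmin_pos; lra. apply Rmin_r.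
Qed.

Lemma Pp_bound u : 1 <= Pp u <= 1 + cc * Rpower K rr.
Proof. unfold Pp. generalize (HH_nonneg (IZR u - 1)) (HH_le (IZR u - 1)) cc_ge2. intros. split; nra. Qed.

Lemma Phi_bound u : Rabs (Phi u) <= 1 + cc * Rpower K rr.
Proof. unfold Phi. destruct Z_le_dec.
  - generalize (Pp_bound u); intro. rewrite Rabs_pos_eq; lra.
  - generalize (Pp_bound (1 - u)); intro. rewrite Rabs_Ropp, Rabs_pos_eq; lra.
Qed.

Definition Dv (v : Z) : R := cc * (HH (IZR v) - HH (IZR v - 1)).

Lemma Dv_nonneg v : 0 <= Dv v.
Proof. unfold Dv. generalize cc_ge2 (HH_mono (IZR v - 1) (IZR v) ltac:(lra)). nra. Qed.

Lemma Dv_big v : (1 <= v)%Z -> IZR v <= K -> 2 * Rpower (IZR v) (- q) <= Dv v.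
Proof.
  intros Hv HvK. unfold Dv. destruct (Z.eq_dec v 1) as [->|Hne].
  - unfold HH. simpl. destruct (Rle_dec 1 0). lra. destruct (Rle_dec (1 - 1) 0); [|lra].
    rewrite Rmin_left by lra. replace (Rpower 1 rr) with 1 by (unfold Rpower; rewrite ln_1, Rmult_0_r, exp_0; reflexivity). replace (Rpower 1 (- q)) with 1 by (unfold Rpower; rewrite ln_1, Rmult_0_r, exp_0; reflexivity). generalize cc_ge2; lra.
  - assert (H2 : 2 <= IZR v) by (apply IZR_le; lia).
    unfold HH. destruct (Rle_dec (IZR v) 0). lra. destruct (Rle_dec (IZR v - 1) 0). lra.
    rewrite !Rmin_left by lra.
    generalize (conc_step (IZR v) rr ltac:(lra) ltac:(generalize rr_pos; unfold rr; lra)).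
    replace (rr - 1) with (- q) by (unfold rr; ring). intro H.
    unfold cc. replace (2 * Rpower (IZR v) (- q)) with (2 / rr * (rr * Rpower (IZR v) (- q))) by (field; generalize rr_pos; lra).
    apply Rmult_le_compat_l. unfold Rdiv. generalize rr_pos; intro. apply Rmult_le_pos. lra. left; apply Rinv_0_lt_compat; lra. exact H.
Qed.

Lemma Phi_step u : Phi (u + 1) - Phi u =
  if Z_le_dec 1 u then Dv u else if Z.eq_dec u 0 then 2 else Dv (- u).
Proof.
  unfold Phi, Dv, Pp.
  destruct (Z_le_dec 1 (u + 1)); destruct (Z_le_dec 1 u); try lia.
  - rewrite plus_IZR. replace (IZR u + 1 - 1) with (IZR u) by ring. ring.
  - destruct (Z.eq_dec u 0); [|lia]. subst. simpl.
    replace (1 - 1) with 0 by ring. unfold HH. destruct (Rle_dec 0 0); [|lra]. ring.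
  - destruct (Z.eq_dec u 0); [lia|].
    replace (1 - (u + 1))%Z with (- u)%Z by lia. rewrite minus_IZR, opp_IZR.
    replace (1 - IZR u - 1) with (- IZR u) by ring. ring.
Qed.

Lemma Phi_inc u : 0 <= Phi (u + 1) - Phi u.
Proof. rewrite Phi_step. destruct Z_le_dec. apply Dv_nonneg. destruct Z.eq_dec. lra. apply Dv_nonneg. Qed.

End PhiSec.


Lemma zabs_nonneg t : 0 <= zabs t.
Proof. apply Rabs_pos. Qed.

Lemma zabs_ge1 t : t <> 0%Z -> 1 <= zabs t.
Proof. intro H. unfold zabs. rewrite <- abs_IZR. apply IZR_le. lia. Qed.

Lemma zabs_sub1 s t : zabs t - zabs s <= zabs (s - t).
Proof. unfold zabs. rewrite minus_IZR, Rabs_minus_sym. apply Rabs_triang_inv. Qed.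

Lemma zabs_sub2 s t : zabs s - zabs t <= zabs (s - t).
Proof. unfold zabs. rewrite minus_IZR. apply Rabs_triang_inv. Qed.

Lemma zabs_0 : zabs 0 = 0.
Proof. unfold zabs. simpl. apply Rabs_R0. Qed.

Lemma decay_poly c w Y x : 0 < c -> 0 < w -> 0 < Y -> 1 <= x -> x / Y <= w ^ 2 ->
  exp (- (c * w)) * (1 + x) ^ 2 <= 4 * (6 / c) ^ 6 * Y ^ 3.
Proof.
  intros Hc Hw HY Hx Hwx.
  generalize (exp_decay c w Hc Hw). intro H.
  assert (H6 : (x / Y) ^ 3 <= w ^ 6).
  { replace (w ^ 6) with ((w ^ 2) ^ 3) by ring. apply pow_incr. split; auto.
    unfold Rdiv; apply Rmult_le_pos; [lra | left; apply Rinv_0_lt_compat; lra]. }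
  assert (Hxy : 0 < (x / Y) ^ 3). { apply pow_lt. unfold Rdiv; apply Rmult_lt_0_compat; [lra | apply Rinv_0_lt_compat; lra]. }
  assert (Hc6 : 0 < (6 / c) ^ 6). { apply pow_lt. unfold Rdiv; apply Rmult_lt_0_compat; [lra | apply Rinv_0_lt_compat; lra]. }
  assert (H' : exp (- (c * w)) <= (6 / c) ^ 6 / (x / Y) ^ 3).
  { eapply Rle_trans. exact H. unfold Rdiv at 1 3. apply Rmult_le_compat_l. lra.
    apply Rinv_le_contravar; auto. }
  assert (E : (6 / c) ^ 6 / (x / Y) ^ 3 = (6 / c) ^ 6 * Y ^ 3 / x ^ 3) by (field; lra).
  rewrite E in H'.
  assert (Hsq : (1 + x) ^ 2 <= 4 * x ^ 2) by nra.
  assert (Hx3 : 0 < x ^ 3) by (apply pow_lt; lra).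
  assert (0 <= exp (- (c * w))) by (left; apply exp_pos).
  apply Rle_trans with ((6 / c) ^ 6 * Y ^ 3 / x ^ 3 * (4 * x ^ 2)).
  { apply Rmult_le_compat; auto. apply pow_le; lra. }
  replace ((6 / c) ^ 6 * Y ^ 3 / x ^ 3 * (4 * x ^ 2)) with (4 * (6 / c) ^ 6 * Y ^ 3 * / x) by (field; lra).
  assert (0 < Y ^ 3) by (apply pow_lt; lra).
  assert (0 < / x <= 1). { split. apply Rinv_0_lt_compat; lra. rewrite <- Rinv_1. apply Rinv_le_contravar; lra. }
  assert (0 < 4 * (6 / c) ^ 6 * Y ^ 3) by (apply Rmult_lt_0_compat; lra).
  nra.
Qed.

Lemma sqrt_sq_ge x : 0 <= x -> sqrt x ^ 2 = x.
Proof. intro. simpl. rewrite Rmult_1_r. apply sqrt_sqrt; auto. Qed.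

Section Cases.
Variables (F G : Z -> C) (A A' K L N Mp c1 q : R).
Hypothesis HA : 0 < A.
Hypothesis HA' : 8 * A <= A'.
Hypothesis HK1 : 1 <= K.
Hypothesis HKMp : 2 * K <= Mp.
Hypothesis HMpL : Mp <= L.
Hypothesis HKL : K <= L.
Hypothesis HLN : 2 * L <= N.
Hypothesis Hc1 : 0 <= c1 <= 1.
Hypothesis Hq : 0 <= q < 1.
Hypothesis HF0 : F 0%Z = RtoC 1.
Hypothesis HFz : forall t, 1 <= zabs t < Mp -> F t = RtoC 0.
Hypothesis HFc : forall t, Mp <= zabs t <= L -> Cmod (F t) <= c1.
Hypothesis HFe : forall t, L <= zabs t -> Cmod (F t) <= exp (- sqrt (zabs t / A')).
Hypothesis HFLc : exp (- sqrt (L / A')) <= c1.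
Hypothesis HG0 : Cmod (G 0%Z) <= 2.
Hypothesis HGp : forall u, 0 < zabs u <= K -> Cmod (G u) <= 2 * Rpower (zabs u) (- q).
Hypothesis HGe : forall u, K <= zabs u -> Cmod (G u) <= exp (- (1/2) * sqrt (zabs u / A)).

Lemma A'pos : 0 < A'. Proof. lra. Qed.

Lemma Fc1 t : t <> 0%Z -> Cmod (F t) <= c1.
Proof.
  intro Ht. generalize (zabs_ge1 t Ht); intro H1.
  destruct (Rlt_le_dec (zabs t) Mp).
  - rewrite HFz by lra. rewrite Cmod_0. lra.
  - destruct (Rle_dec (zabs t) L). apply HFc; lra.
    eapply Rle_trans. apply HFe; lra. eapply Rle_trans; [|exact HFLc].
    apply exp_le. apply Ropp_le_contravar. apply sqrt_le_1_alt.
    unfold Rdiv. apply Rmult_le_compat_r. left; apply Rinv_0_lt_compat; lra. lra.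
Qed.

Lemma Fle1 t : Cmod (F t) <= 1.
Proof. destruct (Z.eq_dec t 0) as [->|H]. rewrite HF0, Cmod_1; lra. generalize (Fc1 t H); lra. Qed.

Lemma Fnz t : F t <> RtoC 0 -> t <> 0%Z -> Mp <= zabs t.
Proof. intros H Ht. destruct (Rlt_le_dec (zabs t) Mp); auto. exfalso. apply H. apply HFz.
  split; auto. apply zabs_ge1; auto. Qed.

Lemma Gle2 u : Cmod (G u) <= 2.
Proof.
  destruct (Z.eq_dec u 0) as [->|Hu]. auto.
  generalize (zabs_ge1 u Hu); intro. destruct (Rle_dec (zabs u) K).
  - eapply Rle_trans. apply HGp; lra.
    assert (Rpower (zabs u) (- q) <= 1).
    { replace 1 with (Rpower (zabs u) 0) by (apply Rpower_O; lra). apply Rle_Rpower; lra. }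
    lra.
  - eapply Rle_trans. apply HGe; lra. assert (0 <= sqrt (zabs u / A)) by apply sqrt_pos.
    assert (Hh : exp (- (1 / 2) * sqrt (zabs u / A)) <= exp 0) by (apply exp_le; lra). rewrite exp_0 in Hh. lra.
Qed.

Lemma Gle1e u : K <= zabs u -> Cmod (G u) <= 1.
Proof. intro H. eapply Rle_trans. apply HGe; auto.
  generalize (sqrt_pos (zabs u / A)). intro.
  assert (Hh : exp (- (1 / 2) * sqrt (zabs u / A)) <= exp 0) by (apply exp_le; lra). rewrite exp_0 in Hh. lra. Qed.


Lemma div_sq x z B : 0 <= z -> x * (1 + z) ^ 2 <= B -> x <= B / (1 + z) ^ 2.
Proof. intros Hz H. assert (0 < (1 + z) ^ 2) by (apply pow_lt; lra).
  apply Rmult_le_reg_r with ((1 + z) ^ 2); auto. unfold Rdiv. rewrite Rmult_assoc, Rinv_l by lra. lra. Qed.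

Lemma sq_ge_le a b : 0 <= a -> 0 <= b -> a ^ 2 <= b ^ 2 -> a <= b.
Proof. intros Ha Hb H. destruct (Rle_dec a b); auto. exfalso. assert (b < a) by lra. nra. Qed.

Lemma caseA s w0 : zabs s <= K -> 0 < w0 -> w0 ^ 2 <= Mp / (2 * A) ->
  Cmod (Cminus (zconv F G s) (G s)) <= 8 * (exp (- (1/4 * w0)) * (4 * (6 / (1/4)) ^ 6 * (2 * A) ^ 3)).
Proof.
  intros Hs Hw0 Hw0M.
  set (Ba := exp (- (1/4 * w0)) * (4 * (6 / (1/4)) ^ 6 * (2 * A) ^ 3)).
  assert (HBa : 0 <= Ba). { unfold Ba. apply Rmult_le_pos. left; apply exp_pos.
    apply Rmult_le_pos. apply Rmult_le_pos. lra. apply pow_le. unfold Rdiv. apply Rmult_le_pos; lra. apply pow_le; lra. }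
  set (f := fun t => Cmult (F t) (G (s - t)%Z)).
  assert (Hpt : forall t, t <> 0%Z -> Cmod (f t) <= Ba / (1 + zabs t) ^ 2).
  { intros t Ht. apply div_sq. apply zabs_nonneg. unfold f. rewrite Cmod_mult.
    destruct (Ceq_dec (F t) (RtoC 0)) as [E|E].
    { rewrite E, Cmod_0. rewrite !Rmult_0_l. auto. }
    assert (Ht1 := Fnz t E Ht).
    assert (Hst : zabs t / 2 <= zabs (s - t)) by (generalize (zabs_sub1 s t); lra).
    assert (HG := HGe (s - t)%Z ltac:(lra)).
    set (w := sqrt (zabs (s - t) / A)) in HG.
    assert (Hw2 : w ^ 2 = zabs (s - t) / A).
    { unfold w. apply sqrt_sq_ge. unfold Rdiv. apply Rmult_le_pos. apply zabs_nonneg. left; apply Rinv_0_lt_compat; lra. }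
    assert (Hwt : zabs t / (2 * A) <= w ^ 2).
    { rewrite Hw2. replace (zabs t / (2 * A)) with ((zabs t / 2) / A) by (field; lra).
      unfold Rdiv at 1 2. apply Rmult_le_compat_r. left; apply Rinv_0_lt_compat; lra. lra. }
    assert (Hw0w : w0 ^ 2 <= w ^ 2).
    { eapply Rle_trans. exact Hw0M. eapply Rle_trans; [|exact Hwt]. unfold Rdiv.
      apply Rmult_le_compat_r. left; apply Rinv_0_lt_compat; lra. lra. }
    assert (Hwpos : 0 <= w) by apply sqrt_pos.
    assert (Hww0 : w0 <= w) by (apply sq_ge_le; lra).
    assert (HFt := Fle1 t).
    assert (Hex : exp (- (1 / 2) * w) = exp (- (1/4 * w0)) * exp (- (1/4 * w)) * exp (- (1/4 * (w - w0)))).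
    { rewrite <- !exp_plus. apply f_equal. field. }
    assert (Hex2 : exp (- (1/4 * (w - w0))) <= 1).
    { assert (Hh : exp (- (1/4 * (w - w0))) <= exp 0) by (apply exp_le; lra). rewrite exp_0 in Hh. exact Hh. }
    assert (Hdp := decay_poly (1/4) w (2 * A) (zabs t) ltac:(lra) ltac:(lra) ltac:(lra) ltac:(lra) Hwt).
    assert (0 <= Cmod (G (s - t)%Z)) by apply Cmod_ge_0.
    assert (0 <= Cmod (F t)) by apply Cmod_ge_0.
    assert (0 < exp (- (1/4 * w0))) by apply exp_pos.
    assert (0 < exp (- (1/4 * w))) by apply exp_pos.
    assert (0 < exp (- (1/4 * (w - w0)))) by apply exp_pos.
    assert (0 <= (1 + zabs t) ^ 2) by (apply pow_le; generalize (zabs_nonneg t); lra).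
    rewrite Hex in HG.
    apply Rle_trans with (exp (- (1/4 * w0)) * (exp (- (1/4 * w)) * (1 + zabs t) ^ 2)).
    2: { unfold Ba. apply Rmult_le_compat_l; lra. }
    apply Rle_trans with (1 * (exp (- (1 / 4 * w0)) * exp (- (1 / 4 * w)) * 1) * (1 + zabs t) ^ 2).
    { apply Rmult_le_compat_r; auto. apply Rmult_le_compat; auto. eapply Rle_trans. exact HG.
      apply Rmult_le_compat_l. nra. auto. }
    lra. }
  set (Bb := Rmax Ba 2).
  assert (Hdom : forall t, Cmod (f t) <= Bb / (1 + zabs t) ^ 2).
  { intro t. destruct (Z.eq_dec t 0) as [->|Ht].
    - rewrite zabs_0. replace ((1 + 0) ^ 2) with 1 by ring. unfold Rdiv. rewrite Rinv_1, Rmult_1_r.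
      unfold f. rewrite Cmod_mult, HF0, Cmod_1, Rmult_1_l. eapply Rle_trans. apply Gle2. apply Rmax_r.
    - eapply Rle_trans. apply Hpt; auto. unfold Rdiv. apply Rmult_le_compat_r.
      left; apply Rinv_0_lt_compat; apply pow_lt; generalize (zabs_nonneg t); lra. apply Rmax_l. }
  assert (Hw : forall t, 0 <= Bb / (1 + zabs t) ^ 2).
  { intro t. unfold Rdiv. apply Rmult_le_pos. eapply Rle_trans; [|apply Rmax_r]; lra.
    left; apply Rinv_0_lt_compat; apply pow_lt; generalize (zabs_nonneg t); lra. }
  assert (Hf0 : G s = f 0%Z). { unfold f. rewrite HF0, Z.sub_0_r. now rewrite Cmult_1_l. }
  unfold zconv. fold f. rewrite Hf0.
  rewrite (zsum_drop0 f _ (4 * Bb) Hdom Hw (fun N => psum_poly Bb N ltac:(eapply Rle_trans; [|apply Rmax_r]; lra))).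
  replace (8 * Ba) with (2 * (4 * Ba)) by ring.
  apply zsum_bound with (w := fun t => Ba / (1 + zabs t) ^ 2).
  - intro t. destruct (Z.eqb_spec t 0). rewrite Cmod_0. unfold Rdiv. apply Rmult_le_pos; auto.
    left; apply Rinv_0_lt_compat; apply pow_lt; generalize (zabs_nonneg t); lra. apply Hpt; auto.
  - intro t. unfold Rdiv. apply Rmult_le_pos; auto.
    left; apply Rinv_0_lt_compat; apply pow_lt; generalize (zabs_nonneg t); lra.
  - intro N0. apply psum_poly; auto.
Qed.

Lemma GD u : zabs u <= K -> Cmod (G u) <= Phi K q (u + 1) - Phi K q u.
Proof.
  intro Hu. rewrite Phi_step. destruct (Z_le_dec 1 u).
  - assert (E : zabs u = IZR u) by (unfold zabs; apply Rabs_pos_eq; apply IZR_le; lia).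
    eapply Rle_trans. apply HGp. split; [|lra]. generalize (zabs_ge1 u ltac:(lia)); lra.
    rewrite E. apply Dv_big; auto. lra.
  - destruct (Z.eq_dec u 0) as [->|Hne]. auto.
    assert (E : zabs u = IZR (- u)) by (unfold zabs; rewrite opp_IZR; rewrite Rabs_left; auto; apply IZR_lt; lia).
    eapply Rle_trans. apply HGp. split; [|lra]. generalize (zabs_ge1 u ltac:(lia)); lra.
    rewrite E. apply Dv_big; auto. lia. lra.
Qed.

Lemma caseB s z1 z0 : K < zabs s <= N -> 0 < z1 -> z1 ^ 2 <= K / A -> 0 < z0 -> z0 ^ 2 <= N / A' ->
  Cmod (zconv F G s) <= 2 * (c1 * (2 * (1 + cc q * Rpower K (rr q))) +
     4 * (9 * N ^ 2 * exp (- (1/2 * z1)) + exp (- (1/2 * z0)) * (4 * (6 / (1/2)) ^ 6 * A' ^ 3))).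
Proof.
  intros Hs Hz1 Hz1K Hz0 Hz0N.
  assert (HN1 : 1 <= N) by lra.
  set (Bb := 9 * N ^ 2 * exp (- (1/2 * z1)) + exp (- (1/2 * z0)) * (4 * (6 / (1/2)) ^ 6 * A' ^ 3)).
  assert (HB1 : 0 <= 9 * N ^ 2 * exp (- (1/2 * z1))).
  { apply Rmult_le_pos. apply Rmult_le_pos. lra. apply pow_le; lra. left; apply exp_pos. }
  assert (HB2 : 0 <= exp (- (1/2 * z0)) * (4 * (6 / (1/2)) ^ 6 * A' ^ 3)).
  { apply Rmult_le_pos. left; apply exp_pos. apply Rmult_le_pos. apply Rmult_le_pos. lra.
    apply pow_le. unfold Rdiv. apply Rmult_le_pos; lra. apply pow_le; lra. }
  assert (HBb : 0 <= Bb) by (unfold Bb; lra).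
  set (f := fun t => Cmult (F t) (G (s - t)%Z)).
  set (w := fun t => c1 * (Phi K q (s - t + 1)%Z - Phi K q (s - t)%Z) + Bb / (1 + zabs t) ^ 2).
  assert (Hpos2 : forall t, 0 < (1 + zabs t) ^ 2) by (intro; apply pow_lt; generalize (zabs_nonneg t); lra).
  assert (HD : forall t, 0 <= c1 * (Phi K q (s - t + 1)%Z - Phi K q (s - t)%Z)).
  { intro t. apply Rmult_le_pos. lra. apply Phi_inc; auto. }
  assert (HP : forall t, 0 <= Bb / (1 + zabs t) ^ 2).
  { intro t. unfold Rdiv. apply Rmult_le_pos; auto. left; apply Rinv_0_lt_compat; auto. }
  assert (Hw : forall t, 0 <= w t) by (intro t; unfold w; generalize (HD t) (HP t); lra).
  assert (Hdom : forall t, Cmod (f t) <= w t).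
  { intro t. unfold f, w. rewrite Cmod_mult.
    assert (0 <= Cmod (F t)) by apply Cmod_ge_0. assert (0 <= Cmod (G (s - t)%Z)) by apply Cmod_ge_0.
    destruct (Rle_dec (zabs (s - t)) K) as [Hst|Hst].
    - assert (Ht : t <> 0%Z). { intro E; subst. rewrite Z.sub_0_r in Hst. lra. }
      generalize (Fc1 t Ht) (GD (s - t)%Z Hst). intros H1 H2.
      generalize (HP t). replace (s - t + 1)%Z with ((s - t) + 1)%Z by ring.
      intro. apply Rle_trans with (c1 * (Phi K q (s - t + 1) - Phi K q (s - t))); [|lra].
      apply Rmult_le_compat; auto.
    - cut (Cmod (F t) * Cmod (G (s - t)%Z) <= Bb / (1 + zabs t) ^ 2). { generalize (HD t); lra. }
      apply div_sq. apply zabs_nonneg.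
      assert (HG := HGe (s - t)%Z ltac:(lra)).
      destruct (Rle_dec (zabs t) (2 * N)) as [Ht|Ht].
      + set (y := sqrt (zabs (s - t) / A)) in HG.
        assert (Hy2 : y ^ 2 = zabs (s - t) / A).
        { unfold y. apply sqrt_sq_ge. unfold Rdiv. apply Rmult_le_pos. apply zabs_nonneg. left; apply Rinv_0_lt_compat; lra. }
        assert (Hyz : z1 <= y).
        { apply sq_ge_le. lra. apply sqrt_pos. rewrite Hy2. eapply Rle_trans. exact Hz1K.
          unfold Rdiv. apply Rmult_le_compat_r. left; apply Rinv_0_lt_compat; lra. lra. }
        assert (HGe2 : Cmod (G (s - t)%Z) <= exp (- (1/2 * z1))).
        { eapply Rle_trans. exact HG. apply exp_le. lra. }
        generalize (Fle1 t). intro HF1.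
        assert (Hsq : (1 + zabs t) ^ 2 <= 9 * N ^ 2).
        { generalize (zabs_nonneg t). intro. apply Rle_trans with ((1 + 2 * N) ^ 2).
          apply pow_incr. lra. nra. }
        assert (0 < exp (- (1/2 * z1))) by apply exp_pos.
        apply Rle_trans with (1 * exp (- (1 / 2 * z1)) * (9 * N ^ 2)).
        { apply Rmult_le_compat; auto. apply Rmult_le_pos; auto. left; apply Hpos2.
          apply Rmult_le_compat; auto. }
        unfold Bb. lra.
      + assert (HtL : L <= zabs t) by lra.
        generalize (HFe t HtL). intro HF.
        set (y := sqrt (zabs t / A')) in HF.
        assert (Hy2 : y ^ 2 = zabs t / A').
        { unfold y. apply sqrt_sq_ge. unfold Rdiv. apply Rmult_le_pos. apply zabs_nonneg. left; apply Rinv_0_lt_compat; lra. }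
        assert (Hyz : z0 <= y).
        { apply sq_ge_le. lra. apply sqrt_pos. rewrite Hy2. eapply Rle_trans. exact Hz0N.
          unfold Rdiv. apply Rmult_le_compat_r. left; apply Rinv_0_lt_compat; lra. lra. }
        assert (HGl := Gle1e (s - t)%Z ltac:(lra)).
        assert (Hex : exp (- y) = exp (- (1/2 * z0)) * exp (- (1/2 * y)) * exp (- (1/2 * (y - z0)))).
        { rewrite <- !exp_plus. apply f_equal. field. }
        assert (Hex2 : exp (- (1/2 * (y - z0))) <= 1).
        { assert (Hh : exp (- (1/2 * (y - z0))) <= exp 0) by (apply exp_le; lra). rewrite exp_0 in Hh. exact Hh. }
        assert (Hdp := decay_poly (1/2) y A' (zabs t) ltac:(lra) ltac:(lra) ltac:(lra) ltac:(lra) ltac:(lra)).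
        assert (0 < exp (- (1/2 * z0))) by apply exp_pos.
        assert (0 < exp (- (1/2 * y))) by apply exp_pos.
        assert (0 < exp (- (1/2 * (y - z0)))) by apply exp_pos.
        assert (HFt : Cmod (F t) <= exp (- (1/2 * z0)) * exp (- (1/2 * y))).
        { rewrite Hex in HF. eapply Rle_trans. exact HF. rewrite <- (Rmult_1_r (exp (- (1 / 2 * z0)) * exp (- (1 / 2 * y)))) at 2.
          apply Rmult_le_compat_l. nra. auto. }
        apply Rle_trans with (exp (- (1/2 * z0)) * (exp (- (1/2 * y)) * (1 + zabs t) ^ 2)).
        { rewrite <- Rmult_assoc. apply Rmult_le_compat_r. left; apply Hpos2.
          rewrite <- (Rmult_1_r (exp (- (1 / 2 * z0)) * exp (- (1 / 2 * y)))). apply Rmult_le_compat; auto. }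
        apply Rle_trans with (exp (- (1/2 * z0)) * (4 * (6 / (1/2)) ^ 6 * A' ^ 3)).
        apply Rmult_le_compat_l; lra. unfold Bb. lra. }
  unfold zconv. fold f. apply zsum_bound with (w := w); auto.
  intro N0. unfold w. rewrite psum_plus, psum_scal.
  generalize (psum_poly Bb N0 HBb). intro HP4.
  rewrite (psum_tele (Phi K q) s N0).
  generalize (Phi_bound K q HK1 Hq (s + Z.of_nat N0 + 2)%Z) (Phi_bound K q HK1 Hq (s - Z.of_nat N0)%Z).
  intros Hb1 Hb2. apply Rabs_le_between in Hb1 ; apply Rabs_le_between in Hb2.
  fold Bb. assert (c1 * (Phi K q (s + Z.of_nat N0 + 2) - Phi K q (s - Z.of_nat N0)) <= c1 * (2 * (1 + cc q * Rpower K (rr q)))).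
  { apply Rmult_le_compat_l. lra. lra. }
  lra.
Qed.

Lemma caseC s z0 : N < zabs s -> 0 < z0 -> z0 ^ 2 <= N / A' ->
  Cmod (zconv F G s) <= 2 * (4 * (exp (- (1/2) * sqrt (zabs s / A')) *
    (2 * exp (- (1/10 * z0)) * (4 * (6 / (1/10)) ^ 6 * A' ^ 3) +
     exp (- (1/8 * z0)) * (4 * (6 / (1/8)) ^ 6 * (2 * A) ^ 3)))).
Proof.
  intros Hs Hz0 Hz0N.
  assert (HN1 : 1 <= N) by lra.
  set (E := exp (- (1/2) * sqrt (zabs s / A'))).
  set (e1 := 2 * exp (- (1/10 * z0)) * (4 * (6 / (1/10)) ^ 6 * A' ^ 3)).
  set (e2 := exp (- (1/8 * z0)) * (4 * (6 / (1/8)) ^ 6 * (2 * A) ^ 3)).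
  assert (He1 : 0 <= e1).
  { unfold e1. apply Rmult_le_pos. apply Rmult_le_pos. lra. left; apply exp_pos. apply Rmult_le_pos. apply Rmult_le_pos. lra.
    apply pow_le. unfold Rdiv. apply Rmult_le_pos; lra. apply pow_le; lra. }
  assert (He2 : 0 <= e2).
  { unfold e2. apply Rmult_le_pos. left; apply exp_pos. apply Rmult_le_pos. apply Rmult_le_pos. lra.
    apply pow_le. unfold Rdiv. apply Rmult_le_pos; lra. apply pow_le; lra. }
  assert (HE : 0 < E) by apply exp_pos.
  set (Bc := E * (e1 + e2)).
  assert (HBc : 0 <= Bc) by (unfold Bc; apply Rmult_le_pos; lra).
  set (f := fun t => Cmult (F t) (G (s - t)%Z)).
  assert (Hpos2 : forall t, 0 < (1 + zabs t) ^ 2) by (intro; apply pow_lt; generalize (zabs_nonneg t); lra).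
  set (z := sqrt (zabs s / A')).
  assert (Hz2 : z ^ 2 = zabs s / A').
  { unfold z. apply sqrt_sq_ge. unfold Rdiv. apply Rmult_le_pos. apply zabs_nonneg. left; apply Rinv_0_lt_compat; lra. }
  assert (Hzz0 : z0 <= z).
  { apply sq_ge_le. lra. apply sqrt_pos. rewrite Hz2. eapply Rle_trans. exact Hz0N.
    unfold Rdiv. apply Rmult_le_compat_r. left; apply Rinv_0_lt_compat; lra. lra. }
  assert (Hzpos : 0 <= z) by apply sqrt_pos.
  assert (HEz : E = exp (- (1/2 * z))) by (unfold E, z; f_equal; ring).
  assert (Hdom : forall t, Cmod (f t) <= Bc / (1 + zabs t) ^ 2).
  { intro t. apply div_sq. apply zabs_nonneg. unfold f. rewrite Cmod_mult.
    assert (0 <= Cmod (F t)) by apply Cmod_ge_0. assert (0 <= Cmod (G (s - t)%Z)) by apply Cmod_ge_0.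
    destruct (Rle_dec (zabs s / 2) (zabs t)) as [Ht|Ht].
    - assert (HtL : L <= zabs t) by lra.
      generalize (HFe t HtL). intro HF.
      set (y := sqrt (zabs t / A')) in HF.
      assert (Hy2 : y ^ 2 = zabs t / A').
      { unfold y. apply sqrt_sq_ge. unfold Rdiv. apply Rmult_le_pos. apply zabs_nonneg. left; apply Rinv_0_lt_compat; lra. }
      assert (Hyz : z ^ 2 / 2 <= y ^ 2).
      { rewrite Hy2, Hz2. replace (zabs s / A' / 2) with ((zabs s / 2) / A') by (field; lra).
        unfold Rdiv at 1 3. apply Rmult_le_compat_r. left; apply Rinv_0_lt_compat; lra. lra. }
      assert (Hypos : 0 <= y) by apply sqrt_pos.
      assert (Hy9 : 6/10 * z <= 9/10 * y) by (apply sq_ge_le; nra).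
      assert (Hypos' : 0 < y).
      { apply Rlt_le_trans with (6/10 * z0 / (9/10)). apply Rmult_lt_0_compat. lra. lra.
        apply Rmult_le_reg_r with (9/10). lra. unfold Rdiv. rewrite Rmult_assoc, Rinv_l by lra. lra. }
      assert (Hex : exp (- y) <= E * exp (- (1/10 * z0)) * exp (- (1/10 * y))).
      { rewrite HEz. rewrite <- !exp_plus. apply exp_le. lra. }
      assert (Hdp := decay_poly (1/10) y A' (zabs t) ltac:(lra) Hypos' ltac:(lra) ltac:(lra) ltac:(lra)).
      generalize (Gle2 (s - t)%Z). intro HG2.
      assert (0 < exp (- (1/10 * z0))) by apply exp_pos.
      assert (0 < exp (- (1/10 * y))) by apply exp_pos.
      apply Rle_trans with ((E * exp (- (1/10 * z0)) * exp (- (1/10 * y))) * 2 * (1 + zabs t) ^ 2).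
      { apply Rmult_le_compat_r. left; apply Hpos2. apply Rmult_le_compat; auto. lra. }
      apply Rle_trans with (E * (2 * exp (- (1/10 * z0))) * (exp (- (1/10 * y)) * (1 + zabs t) ^ 2)).
      { right. ring. }
      apply Rle_trans with (E * (2 * exp (- (1/10 * z0))) * (4 * (6 / (1/10)) ^ 6 * A' ^ 3)).
      { apply Rmult_le_compat_l. apply Rmult_le_pos; lra. auto. }
      unfold Bc, e1. nra.
    - assert (Hst : zabs s / 2 <= zabs (s - t)) by (generalize (zabs_sub2 s t); lra).
      assert (HG := HGe (s - t)%Z ltac:(lra)).
      set (w := sqrt (zabs (s - t) / A)) in HG.
      assert (Hw2 : w ^ 2 = zabs (s - t) / A).
      { unfold w. apply sqrt_sq_ge. unfold Rdiv. apply Rmult_le_pos. apply zabs_nonneg. left; apply Rinv_0_lt_compat; lra. }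
      assert (Hws : zabs s / (2 * A) <= w ^ 2).
      { rewrite Hw2. replace (zabs s / (2 * A)) with ((zabs s / 2) / A) by (field; lra).
        unfold Rdiv at 1 2. apply Rmult_le_compat_r. left; apply Rinv_0_lt_compat; lra. lra. }
      assert (H4 : 4 * z ^ 2 <= zabs s / (2 * A)).
      { rewrite Hz2. unfold Rdiv. rewrite <- Rmult_assoc, (Rmult_comm 4), Rmult_assoc.
        apply Rmult_le_compat_l. apply zabs_nonneg.
        replace (/ (2 * A)) with (4 * / (8 * A)) by (field; lra). apply Rmult_le_compat_l. lra.
        apply Rinv_le_contravar; lra. }
      assert (Hwpos : 0 <= w) by apply sqrt_pos.
      assert (Hw2z : 2 * z <= w) by (apply sq_ge_le; nra).
      assert (Hwpos' : 0 < w).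
      { assert (0 < zabs s / (2 * A)). { unfold Rdiv. apply Rmult_lt_0_compat. lra. apply Rinv_0_lt_compat; lra. }
        assert (0 < w ^ 2) by lra. destruct Hwpos as [Hp|Hp]; auto. rewrite <- Hp in *. simpl in *. lra. }
      assert (Hex : exp (- (1/2) * w) <= E * exp (- (1/8 * z0)) * exp (- (1/8 * w))).
      { rewrite HEz. rewrite <- !exp_plus. apply exp_le. lra. }
      assert (Hdp := decay_poly (1/8) w (2 * A) (zabs s) ltac:(lra) Hwpos' ltac:(lra) ltac:(lra) Hws).
      generalize (Fle1 t). intro HF1.
      assert (Hts : (1 + zabs t) ^ 2 <= (1 + zabs s) ^ 2).
      { apply pow_incr. generalize (zabs_nonneg t); lra. }
      assert (0 < exp (- (1/8 * z0))) by apply exp_pos.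
      assert (0 < exp (- (1/8 * w))) by apply exp_pos.
      apply Rle_trans with (1 * (E * exp (- (1/8 * z0)) * exp (- (1/8 * w))) * (1 + zabs s) ^ 2).
      { apply Rmult_le_compat; auto. apply Rmult_le_pos; auto. left; apply Hpos2.
        apply Rmult_le_compat; auto. lra. }
      apply Rle_trans with (E * exp (- (1/8 * z0)) * (exp (- (1/8 * w)) * (1 + zabs s) ^ 2)).
      { right. ring. }
      apply Rle_trans with (E * exp (- (1/8 * z0)) * (4 * (6 / (1/8)) ^ 6 * (2 * A) ^ 3)).
      { apply Rmult_le_compat_l. apply Rmult_le_pos; lra. auto. }
      unfold Bc, e2. nra. }
  unfold zconv. fold f. apply zsum_bound with (w := fun t => Bc / (1 + zabs t) ^ 2); auto.
  - intro t. unfold Rdiv. apply Rmult_le_pos; auto. left; apply Rinv_0_lt_compat; auto.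
  - intro N0. apply psum_poly; auto.
Qed.

End Cases.


Lemma Rabs_div_z s X : 0 < X -> Rabs (IZR s / X) = zabs s / X.
Proof. intro H. unfold zabs, Rdiv. rewrite Rabs_mult, Rabs_inv, (Rabs_pos_eq X); lra. Qed.

Lemma Rpow_dec x y e : 0 < x <= y -> e <= 0 -> Rpower y e <= Rpower x e.
Proof.
  intros H He. replace e with (- (- e)) by ring. rewrite (Rpower_Ropp y (- e)), (Rpower_Ropp x (- e)).
  apply Rinv_le_contravar. apply Rpower_pos. apply Rle_Rpower_l; lra.
Qed.

Lemma Pdiv M a c : Rpower M a / Rpower M c = Rpower M (a - c).
Proof. unfold Rminus. rewrite Rpower_plus, Rpower_Ropp. reflexivity. Qed.

Lemma Psqrt M a : sqrt (Rpower M a) = Rpower M (a / 2).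
Proof. rewrite <- Rpower_sqrt by apply Rpower_pos. rewrite Rpower_mult. f_equal. Qed.

Lemma Ppow M a n : Rpower M a ^ n = Rpower M (INR n * a).
Proof. rewrite <- Rpower_pow by apply Rpower_pos. rewrite Rpower_mult. f_equal. ring. Qed.

Lemma P0 M : Rpower M 0 = 1.
Proof. unfold Rpower. rewrite Rmult_0_l. apply exp_0. Qed.

Lemma Pge1 M a : 1 <= M -> 0 <= a -> 1 <= Rpower M a.
Proof. intros. rewrite <- (P0 M). apply Rle_Rpower; auto. Qed.

Lemma Rmax_ge a b c : Rmax a b <= c -> a <= c /\ b <= c.
Proof. intro H. split; eapply Rle_trans; [apply Rmax_l | exact H | apply Rmax_r | exact H]. Qed.

Theorem lemma7 (tau2 b eps Ceps : R)
  (Htau2 : 2 <= tau2) (Hb : tau2 < b) (Heps : 0 < eps)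
  (Hdelta : 0 < (b * (1 - eps) - tau2 * (1 + eps) ^ 2)
                  / (tau2 * (b - 1) * (1 + eps)) - eps)
  (HC : 0 < Ceps) :
  let delta := (b * (1 - eps) - tau2 * (1 + eps) ^ 2)
                 / (tau2 * (b - 1) * (1 + eps)) in
  exists Mstar : R, 0 < Mstar /\
  forall M : R, Mstar <= M ->
  let M' := Rpower M b in
  forall F G : Z -> C,
    F 0%Z = RtoC 1 ->
    (forall s : Z, 1 <= zabs s < M' -> F s = RtoC 0) ->
    (forall s : Z, M' <= zabs s <= Rpower M' (tau2 * (1 + eps / 2)) ->
       Cmod (F s) <= Ceps * Rpower M' (-1 + eps)) ->
    (forall s : Z, Rpower M' (tau2 * (1 + eps / 2)) <= zabs s ->
       Cmod (F s) <= exp (- sqrt (Rabs (IZR s / Rpower M' tau2)))) ->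
    Cmod (G 0%Z) <= 2 ->
    (forall s : Z, 0 < zabs s <= Rpower M (tau2 * (1 + eps)) ->
       Cmod (G s) <= 2 * Rpower (zabs s) (- delta + eps)) ->
    (forall s : Z, Rpower M (tau2 * (1 + eps)) <= zabs s ->
       Cmod (G s) <= exp (- (1/2) * sqrt (Rabs (IZR s / Rpower M tau2)))) ->
    (forall s : Z, zabs s <= Rpower M (tau2 * (1 + eps)) ->
       Cmod (Cminus (zconv F G s) (G s)) <= Rpower M' (- delta)) /\
    (forall s : Z, Rpower M (tau2 * (1 + eps)) < zabs s <= Rpower M' (tau2 * (1 + eps)) ->
       Cmod (zconv F G s) <= Rpower (zabs s) (- delta + eps)) /\
    (forall s : Z, Rpower M' (tau2 * (1 + eps)) < zabs s ->
       Cmod (zconv F G s) <= exp (- (1/2) * sqrt (Rabs (IZR s / Rpower M' tau2)))).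
Proof.
  intros delta.
  set (num := b * (1 - eps) - tau2 * (1 + eps) ^ 2).
  set (den := tau2 * (b - 1) * (1 + eps)).
  assert (Hden : 0 < den) by (unfold den; apply Rmult_lt_0_compat; [apply Rmult_lt_0_compat|]; lra).
  assert (Hdd : delta * den = num) by (unfold delta, num, den; field; fold den; lra).
  assert (Hd : 0 < delta - eps) by exact Hdelta.
  assert (Hnum : 0 < num) by nra.
  assert (Heps1 : eps < 1).
  { destruct (Rlt_le_dec eps 1); auto. exfalso. unfold num in Hnum. nra. }
  assert (Hnd : num < den).
  { unfold num, den. assert (tau2 * (1 + eps) ^ 2 >= tau2) by nra.
    assert (tau2 * (b - 1) * (1 + eps) >= tau2 * (b - 1)) by nra. nra. }
  assert (Hd1 : delta < 1).
  { apply Rmult_lt_reg_r with den; auto. rewrite Hdd. lra. }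
  set (q := delta - eps).
  assert (Hq : 0 <= q < 1) by (unfold q; lra).
  assert (Hexp : b * (-1 + eps) + tau2 * (1 + eps) * (1 - q) < - (b * (tau2 * (1 + eps)) * q)).
  { assert (E : b * (-1 + eps) + tau2 * (1 + eps) * (1 - q) + b * (tau2 * (1 + eps)) * q
              = - (b * tau2 * (1 + eps) * eps)).
    { assert (E2 : b * (-1 + eps) + tau2 * (1 + eps) * (1 - q) + b * (tau2 * (1 + eps)) * q
              + b * tau2 * (1 + eps) * eps = delta * den - num) by (unfold q, den, num; ring).
      lra. }
    assert (0 < b * tau2 * (1 + eps) * eps) by (repeat apply Rmult_lt_0_compat; lra). lra. }
  assert (HeK : tau2 * (1 + eps) < b).
  { unfold num in Hnum. assert (tau2 * (1 + eps) ^ 2 >= tau2 * (1 + eps)) by nra. nra. }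
  assert (Hccp : 0 < cc q).
  { unfold cc, rr. unfold Rdiv. apply Rmult_lt_0_compat. lra. apply Rinv_0_lt_compat. lra. }
  assert (Hbte : 0 < b * tau2 * eps) by (repeat apply Rmult_lt_0_compat; lra).
  destruct (big_pow (tau2 * (1 + eps)) b 2 HeK ltac:(lra)) as [M1 [HM1 T1]].
  destruct (big_pow (b * (tau2 * (1 + eps / 2))) (b * (tau2 * (1 + eps))) 2 ltac:(nra) ltac:(lra)) as [M2 [HM2 T2]].
  destruct (big_pow tau2 (b * tau2) 8 ltac:(nra) ltac:(lra)) as [M3 [HM3 T3]].
  destruct (big_pow (b * (-1 + eps)) 0 Ceps ltac:(nra) ltac:(lra)) as [M4 [HM4 T4]].
  destruct (tiny (/ Ceps) 0 (b * (-1 + eps)) 1 (b * tau2 * eps / 4) ltac:(apply Rinv_0_lt_compat; lra) ltac:(lra)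
     ltac:(unfold Rdiv; repeat apply Rmult_lt_0_compat; lra)) as [M5 [HM5 T5]].
  destruct (tiny (8 * (4 * (6 / (1/4)) ^ 6 * 8)) (3 * tau2) (b * (- delta)) (1/8) ((b - tau2) / 2)
     ltac:(apply Rmult_lt_0_compat; [lra|]; apply Rmult_lt_0_compat; [|lra]; apply Rmult_lt_0_compat; [lra|]; apply pow_lt; lra)
     ltac:(lra) ltac:(lra)) as [M6 [HM6 T6]].
  destruct (big_pow (b * (-1 + eps) + tau2 * (1 + eps) * (1 - q)) (- (b * (tau2 * (1 + eps)) * q)) (8 * Ceps * (1 + cc q))
     Hexp ltac:(apply Rmult_lt_0_compat; lra)) as [M7 [HM7 T7]].
  destruct (tiny (4 * (2 * 4 * 9)) (2 * (b * (tau2 * (1 + eps)))) (- (b * (tau2 * (1 + eps)) * q)) (1/2) (tau2 * eps / 2)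
     ltac:(lra) ltac:(lra) ltac:(unfold Rdiv; repeat apply Rmult_lt_0_compat; lra)) as [M8 [HM8 T8]].
  destruct (tiny (4 * (2 * 4 * (4 * (6 / (1/2)) ^ 6))) (3 * (b * tau2)) (- (b * (tau2 * (1 + eps)) * q)) (1/2) (b * tau2 * eps / 2)
     ltac:(apply Rmult_lt_0_compat; [lra|]; apply Rmult_lt_0_compat; [lra|]; apply Rmult_lt_0_compat; [lra|]; apply pow_lt; lra)
     ltac:(lra) ltac:(unfold Rdiv; repeat apply Rmult_lt_0_compat; lra)) as [M9 [HM9 T9]].
  destruct (tiny (16 * (2 * (4 * (6 / (1/10)) ^ 6))) (3 * (b * tau2)) 0 (1/10) (b * tau2 * eps / 2)
     ltac:(apply Rmult_lt_0_compat; [lra|]; apply Rmult_lt_0_compat; [lra|]; apply Rmult_lt_0_compat; [lra|]; apply pow_lt; lra)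
     ltac:(lra) ltac:(unfold Rdiv; repeat apply Rmult_lt_0_compat; lra)) as [M10 [HM10 T10]].
  destruct (tiny (16 * (4 * (6 / (1/8)) ^ 6 * 8)) (3 * tau2) 0 (1/8) (b * tau2 * eps / 2)
     ltac:(apply Rmult_lt_0_compat; [lra|]; apply Rmult_lt_0_compat; [|lra]; apply Rmult_lt_0_compat; [lra|]; apply pow_lt; lra)
     ltac:(lra) ltac:(unfold Rdiv; repeat apply Rmult_lt_0_compat; lra)) as [M11 [HM11 T11]].
  exists (Rmax 1 (Rmax M1 (Rmax M2 (Rmax M3 (Rmax M4 (Rmax M5 (Rmax M6 (Rmax M7 (Rmax M8 (Rmax M9 (Rmax M10 M11))))))))))).
  split. { eapply Rlt_le_trans. apply Rlt_0_1. apply Rmax_l. }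
  intros M HM.
  apply Rmax_ge in HM; destruct HM as [HM0 HM].
  apply Rmax_ge in HM; destruct HM as [HMa1 HM].
  apply Rmax_ge in HM; destruct HM as [HMa2 HM].
  apply Rmax_ge in HM; destruct HM as [HMa3 HM].
  apply Rmax_ge in HM; destruct HM as [HMa4 HM].
  apply Rmax_ge in HM; destruct HM as [HMa5 HM].
  apply Rmax_ge in HM; destruct HM as [HMa6 HM].
  apply Rmax_ge in HM; destruct HM as [HMa7 HM].
  apply Rmax_ge in HM; destruct HM as [HMa8 HM].
  apply Rmax_ge in HM; destruct HM as [HMa9 HM].
  apply Rmax_ge in HM; destruct HM as [HMa10 HMa11].
  specialize (T1 M HMa1). specialize (T2 M HMa2). specialize (T3 M HMa3). specialize (T4 M HMa4).
  specialize (T5 M HMa5). specialize (T6 M HMa6). specialize (T7 M HMa7). specialize (T8 M HMa8).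
  specialize (T9 M HMa9). specialize (T10 M HMa10). specialize (T11 M HMa11).
  intros M' F G HF0 HFz HFc HFe HG0 HGp HGe.
  assert (HMp : 0 < M) by lra.
  set (A := Rpower M tau2). set (A' := Rpower M' tau2).
  set (K := Rpower M (tau2 * (1 + eps))). set (L := Rpower M' (tau2 * (1 + eps / 2))).
  set (N := Rpower M' (tau2 * (1 + eps))). set (c1 := Ceps * Rpower M' (-1 + eps)).
  assert (EA' : A' = Rpower M (b * tau2)) by (unfold A', M'; apply Rpower_mult).
  assert (EL : L = Rpower M (b * (tau2 * (1 + eps / 2)))) by (unfold L, M'; apply Rpower_mult).
  assert (EN : N = Rpower M (b * (tau2 * (1 + eps)))) by (unfold N, M'; apply Rpower_mult).
  assert (Ec1 : c1 = Ceps * Rpower M (b * (-1 + eps))) by (unfold c1, M'; rewrite Rpower_mult; auto).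
  assert (HA : 0 < A) by apply Rpower_pos.
  assert (HA' : 8 * A <= A') by (rewrite EA'; exact T3).
  assert (HK1 : 1 <= K) by (apply Pge1; nra).
  assert (HKMp : 2 * K <= M') by exact T1.
  assert (HMpL : M' <= L) by (rewrite EL; apply Rle_Rpower; nra).
  assert (HKL : K <= L) by (rewrite EL; apply Rle_Rpower; nra).
  assert (HLN : 2 * L <= N) by (rewrite EL, EN; exact T2).
  assert (Hc1 : 0 <= c1 <= 1).
  { rewrite Ec1. split. apply Rmult_le_pos. lra. left; apply Rpower_pos. rewrite <- (P0 M). exact T4. }
  assert (HFLc : exp (- sqrt (L / A')) <= c1).
  { rewrite EL, EA', Pdiv, Psqrt, Ec1.
    replace ((b * (tau2 * (1 + eps / 2)) - b * tau2) / 2) with (b * tau2 * eps / 4) by field.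
    rewrite P0, Rmult_1_r, Rmult_1_l in T5.
    apply Rmult_le_reg_l with (/ Ceps). apply Rinv_0_lt_compat; lra.
    rewrite <- Rmult_assoc, Rinv_l, Rmult_1_l by lra. lra. }
  assert (HGp' : forall u, 0 < zabs u <= K -> Cmod (G u) <= 2 * Rpower (zabs u) (- q)).
  { intros u Hu. replace (- q) with (- delta + eps) by (unfold q; ring). apply HGp; auto. }
  assert (HGe' : forall u, K <= zabs u -> Cmod (G u) <= exp (- (1/2) * sqrt (zabs u / A))).
  { intros u Hu. rewrite <- Rabs_div_z by auto. apply HGe; auto. }
  assert (HFe' : forall t, L <= zabs t -> Cmod (F t) <= exp (- sqrt (zabs t / A'))).
  { intros t Ht. rewrite <- Rabs_div_z by apply Rpower_pos. apply HFe; auto. }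
  assert (HFc' : forall t, M' <= zabs t <= L -> Cmod (F t) <= c1) by (intros; apply HFc; auto).
  split; [|split].
  - intros s Hs.
    set (w0 := 1/2 * Rpower M ((b - tau2) / 2)).
    assert (Hw0 : 0 < w0) by (unfold w0; generalize (Rpower_pos M ((b - tau2) / 2)); lra).
    assert (Hw0M : w0 ^ 2 <= M' / (2 * A)).
    { unfold w0. replace ((1 / 2 * Rpower M ((b - tau2) / 2)) ^ 2) with (1/4 * Rpower M ((b - tau2) / 2) ^ 2) by field.
      rewrite Ppow. replace (M' / (2 * A)) with (1/2 * (M' / A)) by (field; lra). unfold M', A. rewrite Pdiv.
      replace (INR 2 * ((b - tau2) / 2)) with (b - tau2) by (simpl; field).
      generalize (Rpower_pos M (b - tau2)). lra. }
    assert (H : Cmod (Cminus (zconv F G s) (G s)) <= 8 * (exp (- (1/4 * w0)) * (4 * (6 / (1/4)) ^ 6 * (2 * A) ^ 3))).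
    { eapply (caseA F G A A' K L M' c1 q); eauto. }
    eapply Rle_trans. exact H.
    unfold M'. rewrite Rpower_mult.
    replace (8 * (exp (- (1 / 4 * w0)) * (4 * (6 / (1 / 4)) ^ 6 * (2 * A) ^ 3)))
      with (8 * (4 * (6 / (1/4)) ^ 6 * 8) * (A ^ 3) * exp (- (1/8 * Rpower M ((b - tau2) / 2)))).
    2: { unfold w0. replace (- (1 / 4 * (1 / 2 * Rpower M ((b - tau2) / 2)))) with (- (1/8 * Rpower M ((b - tau2) / 2))) by field. ring. }
    unfold A. rewrite Ppow. replace (INR 3 * tau2) with (3 * tau2) by (simpl; ring). exact T6.
  - intros s Hs.
    set (z1 := Rpower M (tau2 * eps / 2)). set (z0 := Rpower M (b * tau2 * eps / 2)).
    assert (Hz1 : 0 < z1) by apply Rpower_pos. assert (Hz0 : 0 < z0) by apply Rpower_pos.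
    assert (Hz1K : z1 ^ 2 <= K / A).
    { unfold z1, K, A. rewrite Ppow, Pdiv. right. f_equal. simpl; field. }
    assert (Hz0N : z0 ^ 2 <= N / A').
    { unfold z0. rewrite EN, EA', Ppow, Pdiv. right. f_equal. simpl; field. }
    assert (H : Cmod (zconv F G s) <= 2 * (c1 * (2 * (1 + cc q * Rpower K (rr q))) +
       4 * (9 * N ^ 2 * exp (- (1/2 * z1)) + exp (- (1/2 * z0)) * (4 * (6 / (1/2)) ^ 6 * A' ^ 3)))).
    { eapply (caseB F G A A' K L N M' c1 q); eauto. }
    eapply Rle_trans. exact H.
    assert (Hs0 : 0 < zabs s) by lra.
    apply Rle_trans with (Rpower N (- q)).
    2: { replace (- delta + eps) with (- q) by (unfold q; ring). apply Rpow_dec. lra. lra. }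
    rewrite EN, Rpower_mult. replace (b * (tau2 * (1 + eps)) * - q) with (- (b * (tau2 * (1 + eps)) * q)) by ring.
    set (tg := Rpower M (- (b * (tau2 * (1 + eps)) * q))).
    assert (P1 : 2 * (c1 * (2 * (1 + cc q * Rpower K (rr q)))) <= tg / 2).
    { set (X := Ceps * Rpower M (b * (-1 + eps))).
      set (Y := Rpower M (tau2 * (1 + eps) * (1 - q))).
      assert (HY : 1 <= Y) by (apply Pge1; [lra | apply Rmult_le_pos; nra]).
      assert (HX : 0 <= X) by (apply Rmult_le_pos; [lra | left; apply Rpower_pos]).
      assert (EY : Rpower K (rr q) = Y) by (unfold K, Y, rr; rewrite Rpower_mult; auto).
      assert (EXY : X * Y = Ceps * Rpower M (b * (-1 + eps) + tau2 * (1 + eps) * (1 - q))).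
      { unfold X, Y. rewrite Rpower_plus. ring. }
      rewrite EY, Ec1. fold X.
      assert (X * (1 + cc q * Y) <= X * ((1 + cc q) * Y)) by (apply Rmult_le_compat_l; nra).
      assert (X * ((1 + cc q) * Y) = (1 + cc q) * (X * Y)) by ring.
      rewrite EXY in H1. unfold tg. lra. }
    assert (P2 : 2 * (4 * (9 * N ^ 2 * exp (- (1/2 * z1)))) <= tg / 4).
    { rewrite EN, Ppow. replace (INR 2 * (b * (tau2 * (1 + eps)))) with (2 * (b * (tau2 * (1 + eps)))) by (simpl; ring).
      unfold tg. unfold z1. lra. }
    assert (P3 : 2 * (4 * (exp (- (1/2 * z0)) * (4 * (6 / (1/2)) ^ 6 * A' ^ 3))) <= tg / 4).
    { rewrite EA', Ppow. replace (INR 3 * (b * tau2)) with (3 * (b * tau2)) by (simpl; ring).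
      unfold tg, z0. lra. }
    rewrite <- EN. lra.
  - intros s Hs.
    set (z0 := Rpower M (b * tau2 * eps / 2)).
    assert (Hz0 : 0 < z0) by apply Rpower_pos.
    assert (Hz0N : z0 ^ 2 <= N / A').
    { unfold z0. rewrite EN, EA', Ppow, Pdiv. right. f_equal. simpl; field. }
    assert (H : Cmod (zconv F G s) <= 2 * (4 * (exp (- (1/2) * sqrt (zabs s / A')) *
      (2 * exp (- (1/10 * z0)) * (4 * (6 / (1/10)) ^ 6 * A' ^ 3) +
       exp (- (1/8 * z0)) * (4 * (6 / (1/8)) ^ 6 * (2 * A) ^ 3))))).
    { eapply (caseC F G A A' K L N M' c1 q); eauto. }
    rewrite Rabs_div_z by (unfold A'; apply Rpower_pos).
    eapply Rle_trans. exact H.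
    set (E := exp (- (1/2) * sqrt (zabs s / A'))).
    assert (HE : 0 < E) by apply exp_pos.
    assert (Q1 : 16 * (2 * exp (- (1/10 * z0)) * (4 * (6 / (1/10)) ^ 6 * A' ^ 3)) <= 1).
    { rewrite EA', Ppow. replace (INR 3 * (b * tau2)) with (3 * (b * tau2)) by (simpl; ring).
      rewrite P0 in T10. unfold z0. lra. }
    assert (Q2 : 16 * (exp (- (1/8 * z0)) * (4 * (6 / (1/8)) ^ 6 * (2 * A) ^ 3)) <= 1).
    { replace ((2 * A) ^ 3) with (8 * A ^ 3) by ring. unfold A. rewrite Ppow.
      replace (INR 3 * tau2) with (3 * tau2) by (simpl; ring).
      rewrite P0 in T11. unfold z0. lra. }
    set (S := 2 * exp (- (1/10 * z0)) * (4 * (6 / (1/10)) ^ 6 * A' ^ 3) +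
       exp (- (1/8 * z0)) * (4 * (6 / (1/8)) ^ 6 * (2 * A) ^ 3)).
    assert (HS : 8 * S <= 1) by (unfold S; lra).
    assert (E * (8 * S) <= E * 1) by (apply Rmult_le_compat_l; lra).
    lra.
Qed.
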